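(* Assume Condition U1. For every $\sigma=(b,v)\in\mathbb{R}\times(-1,1)$, the symplectic form $\Omega$ is nondegenerate on the tangent space $\mathcal{T}_{S(\sigma)}\mathcal{S}=\mathrm{span}\{\tau_1(v),\tau_2(v)\}$, i.e. $\mathcal{T}_{S(\sigma)}\mathcal{S}$ is a symplectic subspace.
   Context: Fix $a>0$. Condition U1: $U:\mathbb{R}\to\mathbb{R}$ smooth, $U(\pm a)=U'(\pm a)=0$, $U''(\pm a)>0$, $U>0$ on $(-a,a)$, $\inf U>-\infty$, and for some $m>0$, $U(\psi)=\frac{m^2}{2}(\psi\mp a)^2+\mathcal{O}(|\psi\mp a|^{14})$ as $\psi\to\pm a$. $s$ is a kink: $s''=U'(s)$, $s(\pm\infty)=\pm a$. For $|v|<1$: $\gamma=(1-v^2)^{-1/2}$, $\psi_v(y)=s(\gamma y)$, $\pi_v=-v\psi_v'$. For $\sigma=(b,v)$, $S(\sigma)=(\psi_v(x-b),\pi_v(x-b))$ and $\mathcal{S}=\{S(\sigma):b\in\mathbb{R},|v|<1\}$. Tangent vectors (as functions of $y=x-b$): $\tau_1(v)=\partial_bS(\sigma)=(-\psi_v'(y),-\pi_v'(y))$, $\tau_2(v)=\partial_vS(\sigma)=(\partial_v\psi_v(y),\partial_v\pi_v(y))$. Symplectic form on $E=H^1(\mathbb{R})\oplus L^2(\mathbb{R})$: $\Omega(Y_1,Y_2)=\langle Y_1,JY_2\rangle=\langle\psi_1,\pi_2\rangle-\langle\pi_1,\psi_2\rangle$, $J=\begin{pmatrix}0&1\\-1&0\end{pmatrix}$,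 $\langle f,g\rangle=\int fg$. *)

(* Defs.v *)
From Stdlib Require Import Reals.
From Coquelicot Require Import Coquelicot.
Open Scope R_scope.

Definition smooth (f : R -> R) : Prop :=
  forall (n : nat) (x : R), ex_derive (Derive_n f n) x.

Definition condition_U1 (a : R) (U : R -> R) : Prop :=
  smooth U /\
  U a = 0 /\ U (- a) = 0 /\
  Derive U a = 0 /\ Derive U (- a) = 0 /\
  Derive_n U 2 a > 0 /\ Derive_n U 2 (- a) > 0 /\
  (forall psi, - a < psi < a -> U psi > 0) /\
  (exists L : R, forall psi, L <= U psi) /\
  (exists m : R, m > 0 /\
     (exists C delta : R, delta > 0 /\
        forall psi, Rabs (psi - a) < delta ->
          Rabs (U psi - m ^ 2 / 2 * (psi - a) ^ 2) <= C * Rabs (psi - a) ^ 14) /\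
     (exists C delta : R, delta > 0 /\
        forall psi, Rabs (psi + a) < delta ->
          Rabs (U psi - m ^ 2 / 2 * (psi + a) ^ 2) <= C * Rabs (psi + a) ^ 14)).

Definition is_kink (a : R) (U s : R -> R) : Prop :=
  (forall x, ex_derive s x) /\
  (forall x, ex_derive (Derive s) x) /\
  (forall x, Derive_n s 2 x = Derive U (s x)) /\
  is_lim s p_infty a /\
  is_lim s m_infty (- a).

Definition gamma (v : R) : R := / sqrt (1 - v ^ 2).

Definition psi_v (s : R -> R) (v : R) (y : R) : R := s (gamma v * y).
Definition pi_v (s : R -> R) (v : R) (y : R) : R := - v * Derive (psi_v s v) y.

(* Elements of E = H^1 + L^2 represented as pairs of real functions of x. *)
Definition Elt := R -> R * R.

Definition L2inner (f g : R -> R) : R :=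
  RInt_gen (fun x => f x * g x) (Rbar_locally m_infty) (Rbar_locally p_infty).

Definition Omega (Y1 Y2 : Elt) : R :=
  L2inner (fun x => fst (Y1 x)) (fun x => snd (Y2 x))
  - L2inner (fun x => snd (Y1 x)) (fun x => fst (Y2 x)).

(* Tangent vectors at S(b,v), as functions of x (with y = x - b). *)
Definition tau1 (s : R -> R) (b v : R) : Elt :=
  fun x => (- Derive (psi_v s v) (x - b), - Derive (pi_v s v) (x - b)).
Definition tau2 (s : R -> R) (b v : R) : Elt :=
  fun x => (Derive (fun w => psi_v s w (x - b)) v,
            Derive (fun w => pi_v s w (x - b)) v).

Definition lincomb (c1 c2 : R) (Y1 Y2 : Elt) : Elt :=
  fun x => (c1 * fst (Y1 x) + c2 * fst (Y2 x), c1 * snd (Y1 x) + c2 * snd (Y2 x)).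

Definition nondegenerate_on_span (Y1 Y2 : Elt) : Prop :=
  forall c1 c2 : R,
    (forall d1 d2 : R, Omega (lincomb c1 c2 Y1 Y2) (lincomb d1 d2 Y1 Y2) = 0) ->
    forall x, lincomb c1 c2 Y1 Y2 x = (0, 0).

(* Main.v *)
Require Import Defs.
From Stdlib Require Import Reals Lra Psatz FunctionalExtensionality Classical.
From Coquelicot Require Import Coquelicot.
Open Scope R_scope.


Lemma ball_R (x y e : R) : Rabs (y - x) < e -> ball x e y.
Proof. intro H. exact H. Qed.

Lemma lim_up (F : R -> R) (B : R) :
  (forall x y, x <= y -> F x <= F y) -> (forall x, F x <= B) ->
  exists L, filterlim F (Rbar_locally p_infty) (locally L) /\ forall x, F x <= L.
Proof.
  intros Hm HB.
  destruct (completeness (fun y => exists x, y = F x)) as [L [HL1 HL2]].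
  { exists B. intros y [x ->]. apply HB. }
  { exists (F 0). eauto. }
  assert (HF : forall x, F x <= L) by (intro x; apply HL1; eauto).
  exists L; split; auto.
  apply filterlim_locally. intro eps.
  assert (Hx : exists x0, L - eps < F x0).
  { apply NNPP. intro Hn. assert (L <= L - eps).
    { apply HL2. intros y [x ->]. apply Rnot_lt_le. intro. apply Hn; eauto. }
    destruct eps; simpl in *; lra. }
  destruct Hx as [x0 Hx0]. exists x0. intros x Hx.
  apply ball_R. specialize (Hm x0 x (Rlt_le _ _ Hx)). specialize (HF x).
  apply Rabs_def1; lra.
Qed.

Lemma lim_down (F : R -> R) (B : R) :
  (forall x y, x <= y -> F x <= F y) -> (forall x, B <= F x) ->
  exists L, filterlim F (Rbar_locally m_infty) (locally L) /\ forall x, L <= F x.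
Proof.
  intros Hm HB.
  destruct (completeness (fun y => exists x, y = - F x)) as [L [HL1 HL2]].
  { exists (-B). intros y [x ->]. specialize (HB x). lra. }
  { exists (- F 0). eauto. }
  assert (HF : forall x, - F x <= L) by (intro x; apply HL1; eauto).
  exists (-L); split; [|intro x; specialize (HF x); lra].
  apply filterlim_locally. intro eps.
  assert (Hx : exists x0, L - eps < - F x0).
  { apply NNPP. intro Hn. assert (L <= L - eps).
    { apply HL2. intros y [x ->]. apply Rnot_lt_le. intro. apply Hn; eauto. }
    destruct eps; simpl in *; lra. }
  destruct Hx as [x0 Hx0]. exists x0. intros x Hx.
  apply ball_R. specialize (Hm x x0 (Rlt_le _ _ Hx)). specialize (HF x).
  apply Rabs_def1; lra.
Qed.


Lemma int_exp_pos (N c x : R) : 0 < c -> 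
  is_RInt (fun t => N * exp (-(c*t))) 0 x (N/c - N/c * exp (-(c*x))).
Proof.
  intro Hc.
  replace (N/c - N/c * exp (-(c*x))) with (minus ((fun t => -(N/c)*exp(-(c*t))) x) ((fun t => -(N/c)*exp(-(c*t))) 0)).
  2:{ unfold minus, plus, opp; simpl. rewrite Rmult_0_r, Ropp_0, exp_0. ring. }
  apply (is_RInt_derive (fun t => -(N/c)*exp(-(c*t)))).
  - intros t _. auto_derive; auto. field. lra.
  - intros t _. apply (ex_derive_continuous (V:=R_NormedModule)). auto_derive. auto.
Qed.

Lemma int_exp_neg (N c x : R) : 0 < c -> 
  is_RInt (fun t => N * exp (c*t)) x 0 (N/c - N/c * exp (c*x)).
Proof.
  intro Hc.
  replace (N/c - N/c * exp (c*x)) with (minus ((fun t => (N/c)*exp(c*t)) 0) ((fun t => (N/c)*exp(c*t)) x)).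
  2:{ unfold minus, plus, opp; simpl. rewrite Rmult_0_r, exp_0. ring. }
  apply (is_RInt_derive (fun t => (N/c)*exp(c*t))).
  - intros t _. auto_derive; auto. field. lra.
  - intros t _. apply (ex_derive_continuous (V:=R_NormedModule)). auto_derive. auto.
Qed.

Lemma int_nonneg (h : R -> R) (N c : R) : 0 < c -> (forall x, continuous h x) ->
  (forall x, 0 <= h x <= N * exp (-(c * Rabs x))) ->
  exists l, is_RInt_gen h (Rbar_locally m_infty) (Rbar_locally p_infty) l /\
   forall A B, A <= B -> RInt h A B <= l.
Proof.
  intros Hc Hcont Hb.
  assert (exR : forall u v, ex_RInt h u v) by (intros; apply (ex_RInt_continuous (V:=R_CompleteNormedModule)); auto).
  assert (HN : 0 <= N). { destruct (Hb 0) as [H1 H2]. pose proof (exp_pos (-(c*Rabs 0))). nra. }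
  set (F := fun x => (RInt h 0 x : R)).
  assert (Ch : forall u v, RInt h u v = F v - F u).
  { intros u v. unfold F. rewrite <- (RInt_Chasles h 0 u v) by auto.
    unfold plus; simpl. unfold Rminus. rewrite (Rplus_comm (RInt h 0 u)), Rplus_assoc, Rplus_opp_r, Rplus_0_r. reflexivity. }
  assert (Hm : forall x y, x <= y -> F x <= F y).
  { intros x y Hxy. assert (0 <= RInt h x y). apply RInt_ge_0; auto. intros; apply Hb.
    rewrite Ch in H. lra. }
  assert (HBu : forall x, F x <= N / c).
  { intro x. destruct (Rle_dec 0 x).
    - unfold F. apply Rle_trans with (RInt (fun t => N * exp (-(c*t))) 0 x).
      + apply RInt_le; auto. eexists; apply int_exp_pos; auto.
        intros t Ht. replace (c*t) with (c*Rabs t) by (rewrite Rabs_right; lra). apply Hb.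
      + rewrite (is_RInt_unique _ _ _ _ (int_exp_pos N c x Hc)).
        pose proof (exp_pos (-(c*x))). assert (0 <= N/c) by (apply Rdiv_le_0_compat; lra). nra.
    - apply Rle_trans with (F 0). apply Hm; lra. unfold F. rewrite RInt_point.
      apply Rdiv_le_0_compat; lra. }
  assert (HBd : forall x, - (N / c) <= F x).
  { intro x. destruct (Rle_dec x 0).
    - assert (RInt h x 0 <= N/c).
      { apply Rle_trans with (RInt (fun t => N * exp (c*t)) x 0).
      + apply RInt_le; auto. eexists; apply int_exp_neg; auto.
        intros t Ht. replace (c*t) with (-(c*Rabs t)). apply Hb.
        rewrite Rabs_left by lra. ring.
      + rewrite (is_RInt_unique _ _ _ _ (int_exp_neg N c x Hc)).
        pose proof (exp_pos (c*x)). assert (0 <= N/c) by (apply Rdiv_le_0_compat; lra). nra. }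
      rewrite Ch in H. assert (F 0 = 0) by (unfold F; rewrite RInt_point; reflexivity). lra.
    - apply Rle_trans with (F 0). assert (F 0 = 0) by (unfold F; rewrite RInt_point; reflexivity).
      assert (0 <= N/c) by (apply Rdiv_le_0_compat; lra). lra. apply Hm; lra. }
  destruct (lim_up F _ Hm HBu) as [Lp [HLp HLp2]].
  destruct (lim_down F _ Hm HBd) as [Lm [HLm HLm2]].
  assert (HD : forall x, is_derive F x (h x)).
  { intro x. apply (is_derive_RInt (V:=R_CompleteNormedModule)) with 0; auto. apply filter_forall. intro. apply (RInt_correct (V:=R_CompleteNormedModule)); auto. }
  assert (HDe : Derive F = h). { apply functional_extensionality. intro x. apply is_derive_unique, HD. }
  exists (Lp - Lm). split.
  - rewrite <- HDe. apply is_RInt_gen_Derive; auto.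
    + apply filter_forall. intros. eexists; apply HD.
    + apply filter_forall. intros. rewrite HDe. auto.
  - intros A B HAB. rewrite Ch. specialize (HLp2 B). specialize (HLm2 A). lra.
Qed.


Lemma cont_expabs (M c : R) x : continuous (fun x => M * exp (-(c * Rabs x))) x.
Proof.
  apply (continuous_mult (fun _ => M) (fun x => exp (-(c * Rabs x)))).
  apply continuous_const.
  apply (continuous_comp (fun x => -(c*Rabs x)) exp).
  apply (continuous_opp (fun x => c * Rabs x)).
  apply (continuous_mult (fun _ => c) Rabs). apply continuous_const. apply continuous_Rabs.
  apply (ex_derive_continuous (V:=R_NormedModule)). auto_derive; auto.
Qed.

Lemma int_signed (f : R -> R) (M c : R) : 0 < c -> (forall x, continuous f x) ->
  (forall x, Rabs (f x) <= M * exp (-(c * Rabs x))) ->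
  exists l, is_RInt_gen f (Rbar_locally m_infty) (Rbar_locally p_infty) l.
Proof.
  intros Hc Hf Hb.
  set (g0 := fun x => M * exp (-(c * Rabs x))).
  destruct (int_nonneg g0 (2*M) c Hc) as [l2 [H2 _]].
  { intro; apply cont_expabs. }
  { intro x. unfold g0. pose proof (Hb x). pose proof (Rabs_pos (f x)). pose proof (exp_pos (-(c*Rabs x))). nra. }
  destruct (int_nonneg (fun x => f x + g0 x) (2*M) c Hc) as [l1 [H1 _]].
  { intro x. apply (continuous_plus f g0); auto. apply cont_expabs. }
  { intro x. unfold g0. pose proof (Hb x). pose proof (Rabs_pos (f x)). pose proof (exp_pos (-(c*Rabs x))).
    apply Rabs_le_between in H. nra. }
  exists (minus l1 l2).
  pose proof (is_RInt_gen_minus _ _ _ _ H1 H2) as H.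
  replace f with (fun y => minus (f y + g0 y) (g0 y)). exact H.
  apply functional_extensionality. intro y. unfold minus, plus, opp; simpl. ring.
Qed.

Lemma int_pos (h : R -> R) (N c x0 l : R) : 0 < c -> (forall x, continuous h x) ->
  (forall x, 0 <= h x <= N * exp (-(c * Rabs x))) -> 0 < h x0 ->
  is_RInt_gen h (Rbar_locally m_infty) (Rbar_locally p_infty) l -> 0 < l.
Proof.
  intros Hc Hf Hb Hx0 Hl.
  destruct (int_nonneg h N c Hc Hf Hb) as [l' [Hl' Hle]].
  assert (l = l').
  { rewrite <- (is_RInt_gen_unique _ _ Hl), <- (is_RInt_gen_unique _ _ Hl'). reflexivity. }
  subst l'.
  pose proof (Hf x0) as Hc0. apply filterlim_locally with (eps := mkposreal _ (ltac:(lra) : 0 < h x0 / 2)) in Hc0.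
  destruct Hc0 as [d Hd].
  apply Rlt_le_trans with (RInt h (x0 - d/2) (x0 + d/2)).
  - apply RInt_gt_0. destruct d; simpl; lra.
    intros x Hx. assert (ball x0 d x).
    { apply ball_R. destruct d as [d dp]; simpl in *. apply Rabs_def1; lra. }
    apply Hd in H. unfold ball in H; simpl in H; unfold AbsRing_ball, abs, minus, plus, opp in H; simpl in H.
    apply Rabs_def2 in H. simpl in H. lra.
    intros; auto.
  - apply Hle. destruct d; simpl; lra.
Qed.


Lemma lim_pinf (f : R -> R) (l e : R) : 0 < e -> is_lim f p_infty l ->
  exists X, forall x, X < x -> Rabs (f x - l) < e.
Proof.
  intros He H. apply is_lim_spec in H. destruct (H (mkposreal e He)) as [X HX].
  exists X. intros. apply HX. auto.
Qed.

Lemma lim_minf (f : R -> R) (l e : R) : 0 < e -> is_lim f m_infty l ->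
  exists X, forall x, x < X -> Rabs (f x - l) < e.
Proof.
  intros He H. apply is_lim_spec in H. destruct (H (mkposreal e He)) as [X HX].
  exists X. intros. apply HX. auto.
Qed.

Lemma mvt (h dh : R -> R) (a x : R) : a <= x ->
  (forall t, a <= t <= x -> is_derive h t (dh t)) ->
  exists xi, a <= xi <= x /\ h x - h a = dh xi * (x - a).
Proof.
  intros Hax Hd.
  destruct (MVT_gen h a x dh) as [xi [Hxi Heq]].
  - intros t Ht. apply Hd. rewrite Rmin_left, Rmax_right in Ht; lra.
  - intros t Ht. rewrite Rmin_left, Rmax_right in Ht by lra.
    apply continuity_pt_filterlim. apply (ex_derive_continuous (V:=R_NormedModule)).
    eexists. apply Hd; auto.
  - exists xi. rewrite Rmin_left, Rmax_right in Hxi by lra. auto.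
Qed.

Lemma decr_from (h dh : R -> R) (a : R) :
  (forall t, a <= t -> is_derive h t (dh t)) -> (forall t, a <= t -> dh t <= 0) ->
  forall x, a <= x -> h x <= h a.
Proof.
  intros Hd Hn x Hx. destruct (mvt h dh a x Hx) as [xi [Hxi E]].
  intros; apply Hd; lra. specialize (Hn xi (proj1 Hxi)). nra.
Qed.

Lemma incr_from (h dh : R -> R) (a : R) :
  (forall t, a <= t -> is_derive h t (dh t)) -> (forall t, a <= t -> 0 <= dh t) ->
  forall x, a <= x -> h a <= h x.
Proof.
  intros Hd Hn x Hx. destruct (mvt h dh a x Hx) as [xi [Hxi E]].
  intros; apply Hd; lra. specialize (Hn xi (proj1 Hxi)). nra.
Qed.

Lemma isd_val (f : R -> R) x (l l' : R) : is_derive f x l -> l = l' -> is_derive f x l'.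
Proof. intros H ->; exact H. Qed.

Lemma isd_fun (f g : R -> R) x (l : R) : is_derive f x l -> (forall t, f t = g t) -> is_derive g x l.
Proof. intros H E. apply is_derive_ext with f; auto. Qed.

Ltac simpl_ops := unfold plus, mult, minus, opp, zero, one, scal in *; simpl in *.

Lemma is_derive_sq_shift (f : R -> R) (a0 x : R) : ex_derive f x ->
  is_derive (fun x => (f x - a0)^2) x (2 * (f x - a0) * Derive f x).
Proof.
  intro H. auto_derive. auto. change (Derive (fun x0 => f x0) x) with (Derive f x). ring.
Qed.

Lemma cont_glob (f : R -> R) : (forall x, continuous f x) -> continuity f.
Proof. intros H x. apply continuity_pt_filterlim. apply H. Qed.

Lemma sign_const (d : R -> R) (X1 x1 : R) : (forall x, continuous d x) ->
  (forall x, X1 <= x -> d x <> 0) -> X1 <= x1 ->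
  forall x, x1 <= x -> 0 < d x * d x1.
Proof.
  intros Hc Hnz Hx1 x Hx.
  destruct (Rlt_dec 0 (d x * d x1)) as [|Hn]; auto. exfalso.
  destruct (IVT_gen d x1 x 0 (cont_glob d Hc)) as [z [Hz Hdz]].
  { unfold Rmin, Rmax. destruct (Rle_dec (d x1) (d x)); nra. }
  apply (Hnz z); auto. unfold Rmin in Hz. destruct (Rle_dec x1 x); lra.
Qed.

Lemma decay (f U : R -> R) (a0 k K rho : R) :
  (forall x, ex_derive f x) -> (forall x, continuous (Derive f) x) ->
  (forall x, (Derive f x)^2 = 2 * U (f x)) -> 0 < k -> 0 < rho ->
  (forall p, Rabs (p - a0) <= rho -> k*(p-a0)^2 <= U p <= K*(p-a0)^2) ->
  is_lim f p_infty a0 ->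
  exists C kap X, 0 < kap /\ forall x, X <= x -> (f x - a0)^2 <= C * exp (-(kap*x)).
Proof.
  intros Hd Hdc HE Hk Hr HU Hl.
  destruct (lim_pinf f a0 rho Hr Hl) as [X0 HX0].
  set (X1 := X0 + 1).
  assert (HB : forall x, X1 <= x -> k*(f x-a0)^2 <= U (f x) <= K*(f x-a0)^2).
  { intros x Hx. apply HU. left. apply HX0. unfold X1 in Hx; lra. }
  assert (HKk : k <= K).
  { assert (Ha : Rabs (a0 + rho - a0) <= rho) by (replace (a0 + rho - a0) with rho by ring; rewrite Rabs_right; lra).
    destruct (HU _ Ha) as [H1 H2].
    replace (a0 + rho - a0) with rho in H1, H2 by ring. assert (0 < rho^2) by (apply pow_lt; lra). apply Rmult_le_reg_r with (rho^2); lra. }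
  assert (Hsq : forall x, X1 <= x -> (f x - a0)^2 < rho^2).
  { intros x Hx. assert (Rabs (f x - a0) < rho) by (apply HX0; unfold X1 in Hx; lra).
    rewrite <- pow2_abs. pose proof (Rabs_pos (f x - a0)). nra. }
  destruct (classic (exists x0, X1 <= x0 /\ f x0 = a0)) as [[x0 [Hx0 Hfx0]] | Hno].
  - set (L := 8*K+1).
    assert (Hz : forall x, x0 <= x -> (f x - a0)^2 = 0).
    { intros x Hx.
      assert (Hh : (f x - a0)^2 * exp (-(L*x)) <= (f x0 - a0)^2 * exp (-(L*x0))).
      { apply (decr_from (fun x => (f x - a0)^2 * exp (-(L*x)))
           (fun t => (2 * (f t - a0) * Derive f t - L * (f t - a0)^2) * exp (-(L*t)))); auto.
        - intros t _. auto_derive. auto. change (Derive (fun x0 => f x0) t) with (Derive f t). ring.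
        - intros t Ht. pose proof (exp_pos (-(L*t))).
          assert (2 * (f t - a0) * Derive f t <= L * (f t - a0)^2).
          { destruct (HB t ltac:(lra)) as [_ H2]. pose proof (HE t).
            assert (0 <= (f t - a0)^2) by apply pow2_ge_0.
            assert ((2 * (f t - a0) * Derive f t)^2 <= (L * (f t - a0)^2)^2).
            { replace ((2 * (f t - a0) * Derive f t)^2) with (4 * (f t - a0)^2 * (Derive f t)^2) by ring.
              rewrite H0. unfold L. nra. }
            unfold L in *. nra. }
          nra. }
      rewrite Hfx0 in Hh. replace (a0 - a0) with 0 in Hh by ring.
      pose proof (exp_pos (-(L*x))). assert (0 <= (f x - a0)^2) by apply pow2_ge_0.
      simpl in Hh. nra. }
    exists (rho^2 * exp x0), 1, X1. split; [lra|]. intros x Hx.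
    destruct (Rle_dec x x0).
    + specialize (Hsq x Hx). assert (1 <= exp x0 * exp (-(1*x))).
      { rewrite <- exp_plus. replace 1 with (exp 0) at 1 by apply exp_0. 
        destruct (Req_dec (x0 + - (1*x)) 0) as [->|]; [lra|].
        left; apply exp_increasing. lra. }
      nra.
    + rewrite Hz by lra. pose proof (exp_pos x0). pose proof (exp_pos (-(1*x))).
      assert (0 <= rho^2) by apply pow2_ge_0. 
      apply Rmult_le_pos; auto. nra. lra.
  - assert (Hne : forall x, X1 <= x -> f x <> a0) by (intros y Hy E; apply Hno; exists y; auto).
    assert (HDnz : forall x, X1 <= x -> Derive f x <> 0).
    { intros x Hx E. destruct (HB x Hx) as [H1 _]. pose proof (HE x). rewrite E in H.
      assert (f x - a0 <> 0) by (intro; apply (Hne x Hx); lra).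
      assert (0 < (f x - a0)^2) by (apply pow2_gt_0; auto). nra. }
    assert (Hneg : forall x, X1 <= x -> (f x - a0) * Derive f x < 0).
    { intros x1 Hx1. destruct (Rlt_dec ((f x1 - a0) * Derive f x1) 0) as [|Hn]; auto. exfalso.
      assert (f x1 - a0 <> 0) by (intro; apply (Hne x1 Hx1); lra).
      pose proof (HDnz x1 Hx1).
      assert (Hsc := sign_const (Derive f) X1 x1 Hdc HDnz Hx1).
      destruct (Rlt_dec 0 (Derive f x1)).
      + assert (Hi : forall x, x1 <= x -> f x1 <= f x).
        { apply (incr_from f (Derive f)). intros; apply Derive_correct; auto.
          intros t Ht. specialize (Hsc t Ht). nra. }
        assert (Hd0 : 0 < f x1 - a0) by nra.
        destruct (lim_pinf f a0 _ Hd0 Hl) as [X2 HX2].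
        set (z := Rmax x1 X2 + 1).
        assert (Hz1 : x1 <= z) by (unfold z; pose proof (Rmax_l x1 X2); lra).
        assert (Hz2 : X2 < z) by (unfold z; pose proof (Rmax_r x1 X2); lra).
        specialize (HX2 z Hz2). specialize (Hi z Hz1). apply Rabs_def2 in HX2. lra.
      + assert (Hi : forall x, x1 <= x -> f x <= f x1).
        { apply (decr_from f (Derive f)). intros; apply Derive_correct; auto.
          intros t Ht. specialize (Hsc t Ht). nra. }
        assert (Hd0 : 0 < a0 - f x1) by nra.
        destruct (lim_pinf f a0 _ Hd0 Hl) as [X2 HX2].
        set (z := Rmax x1 X2 + 1).
        assert (Hz1 : x1 <= z) by (unfold z; pose proof (Rmax_l x1 X2); lra).
        assert (Hz2 : X2 < z) by (unfold z; pose proof (Rmax_r x1 X2); lra).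
        specialize (HX2 z Hz2). specialize (Hi z Hz1). apply Rabs_def2 in HX2. lra. }
    set (kap := k / (k+1)).
    assert (Hkap : 0 < kap /\ kap <= 1 /\ kap <= k).
    { unfold kap. split. apply Rdiv_lt_0_compat; lra. split.
      apply Rmult_le_reg_r with (k+1). lra. unfold Rdiv. rewrite Rmult_assoc, Rinv_l by lra. lra.
      apply Rmult_le_reg_r with (k+1). lra. unfold Rdiv. rewrite Rmult_assoc, Rinv_l by lra. nra. }
    exists ((f X1 - a0)^2 * exp (kap * X1)), kap, X1. split; [lra|]. intros x Hx.
    assert (Hh : (f x - a0)^2 * exp (kap*x) <= (f X1 - a0)^2 * exp (kap*X1)).
    { apply (decr_from (fun x => (f x - a0)^2 * exp (kap*x))
         (fun t => (2 * (f t - a0) * Derive f t + kap * (f t - a0)^2) * exp (kap*t))); auto.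
      - intros t _. auto_derive. auto. change (Derive (fun x0 => f x0) t) with (Derive f t). ring.
      - intros t Ht. pose proof (exp_pos (kap*t)).
        assert (2 * (f t - a0) * Derive f t <= - kap * (f t - a0)^2).
        { destruct (HB t Ht) as [H1 _]. pose proof (HE t). specialize (Hneg t Ht).
          assert (0 <= (f t - a0)^2) by apply pow2_ge_0.
          assert ((kap * (f t - a0)^2)^2 <= (2 * (f t - a0) * Derive f t)^2).
          { replace ((2 * (f t - a0) * Derive f t)^2) with (4 * (f t - a0)^2 * (Derive f t)^2) by ring.
            rewrite H0. set (g := (f t - a0)^2) in *.
            assert (kap*kap <= k) by nra.
            assert (kap*kap*(g*g) <= k*(g*g)) by (apply Rmult_le_compat_r; nra).
            assert (k*g*g <= U (f t) * g) by (apply Rmult_le_compat_r; nra).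
            nra. }
          set (g := (f t - a0)^2) in *. set (dg := 2 * (f t - a0) * Derive f t) in *.
          assert (dg < 0) by (unfold dg; nra). nra. }
        nra. }
    pose proof (exp_pos (kap*x)).
    replace ((f x - a0)^2) with ((f x - a0)^2 * exp (kap*x) * exp (-(kap*x))).
    apply Rmult_le_compat_r. left; apply exp_pos. auto.
    rewrite Rmult_assoc, <- exp_plus. replace (kap*x + - (kap*x)) with 0 by ring. rewrite exp_0. ring.
Qed.


Lemma U_quad (U : R -> R) (a0 m C delta : R) : 0 < m -> 0 < delta ->
  (forall p, Rabs (p - a0) < delta -> Rabs (U p - m ^ 2 / 2 * (p - a0) ^ 2) <= C * Rabs (p - a0) ^ 14) ->
  exists rho k K, 0 < rho /\ 0 < k /\
   forall p, Rabs (p - a0) <= rho -> k*(p-a0)^2 <= U p <= K*(p-a0)^2.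
Proof.
  intros Hm Hd HU.
  assert (Hm2 : 0 < m^2) by (apply pow_lt; lra).
  set (r := m^2 / (4 * (Rabs C + 1))).
  assert (Hr : 0 < r) by (unfold r; apply Rdiv_lt_0_compat; [lra|pose proof (Rabs_pos C); lra]).
  set (rho := Rmin (delta/2) (Rmin 1 r)).
  assert (Hrho : 0 < rho /\ rho <= delta/2 /\ rho <= 1 /\ rho <= r).
  { unfold rho. repeat split.
    - apply Rmin_pos; [lra | apply Rmin_pos; lra].
    - apply Rmin_l.
    - eapply Rle_trans; [apply Rmin_r|apply Rmin_l].
    - eapply Rle_trans; [apply Rmin_r|apply Rmin_r]. }
  exists rho, (m^2/4), (3*m^2/4). split; [lra|split; [lra|]].
  intros p Hp. set (t := Rabs (p - a0)) in *.
  assert (Ht0 : 0 <= t) by apply Rabs_pos.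
  assert (He : (p - a0)^2 = t^2) by (unfold t; rewrite pow2_abs; reflexivity).
  specialize (HU p ltac:(unfold t in Hp; lra)). fold t in HU.
  assert (H11 : t^11 <= 1) by (rewrite <- (pow1 11); apply pow_incr; lra).
  assert (H12 : t^12 <= t) by (replace (t^12) with (t * t^11) by ring; nra).
  assert (HCr : Rabs C * r <= m^2/4).
  { unfold r. pose proof (Rabs_pos C).
    replace (Rabs C * (m ^ 2 / (4 * (Rabs C + 1)))) with ((m^2/4) * (Rabs C / (Rabs C + 1))) by (field; lra).
    assert (Rabs C / (Rabs C + 1) <= 1).
    { apply Rmult_le_reg_r with (Rabs C + 1). lra. unfold Rdiv. rewrite Rmult_assoc, Rinv_l by lra. lra. }
    assert (0 <= m^2/4) by lra. nra. }
  assert (HC14 : C * t^14 <= m^2/4 * t^2).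
  { replace (t^14) with (t^12 * t^2) by ring.
    assert (0 <= t^2) by apply pow2_ge_0. assert (0 <= t^12) by (apply pow_le; lra).
    assert (C <= Rabs C) by apply Rle_abs. pose proof (Rabs_pos C).
    assert (C * (t^12 * t^2) <= Rabs C * (t^12 * t^2)) by (apply Rmult_le_compat_r; nra).
    assert (t^12 <= r) by lra.
    assert (Rabs C * t^12 <= Rabs C * r) by (apply Rmult_le_compat_l; lra).
    assert (Rabs C * t^12 <= m^2/4) by lra.
    nra. }
  rewrite He in *. apply Rabs_le_between in HU. split; nra.
Qed.

Lemma Up_bound (U : R -> R) (a0 : R) :
  (forall x, ex_derive (Derive U) x) -> (forall x, continuous (Derive (Derive U)) x) ->
  Derive U a0 = 0 ->
  exists rho K, 0 < rho /\ forall p, Rabs (p - a0) <= rho -> Rabs (Derive U p) <= K * Rabs (p - a0).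
Proof.
  intros Hd Hc H0.
  pose proof (Hc a0) as Hca. apply filterlim_locally with (eps := mkposreal 1 Rlt_0_1) in Hca.
  destruct Hca as [d Hdd].
  exists (d/2), (Rabs (Derive (Derive U) a0) + 1). split. destruct d; simpl; lra.
  intros p Hp.
  destruct (MVT_gen (Derive U) a0 p (Derive (Derive U))) as [xi [Hxi E]].
  - intros; apply Derive_correct; auto.
  - intros; apply continuity_pt_filterlim. apply (ex_derive_continuous (V:=R_NormedModule)). auto.
  - rewrite H0 in E. rewrite Rminus_0_r in E. rewrite E, Rabs_mult.
    apply Rmult_le_compat_r. apply Rabs_pos.
    assert (Hb : ball a0 d xi).
    { change (Rabs (xi - a0) < d). apply Rabs_def1; unfold Rmin, Rmax in Hxi; apply Rabs_le_between in Hp;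
      destruct d as [d dp]; simpl in *; destruct (Rle_dec a0 p); lra. }
    specialize (Hdd xi Hb). unfold ball in Hdd; simpl in Hdd. unfold AbsRing_ball, abs, minus, plus, opp in Hdd; simpl in Hdd.
    pose proof (Rabs_triang_inv (Derive (Derive U) xi) (Derive (Derive U) a0)). simpl in *. unfold Rminus in *. lra.
Qed.


Lemma exp_mono x y : x <= y -> exp x <= exp y.
Proof. intro H. destruct (Req_dec x y) as [->|]; [lra|]. left; apply exp_increasing; lra. Qed.

Lemma glue (h : R -> R) : (forall x, continuous h x) ->
  (exists C1 c1 X1, 0 < c1 /\ forall x, X1 <= x -> Rabs (h x) <= C1 * exp (-(c1*x))) ->
  (exists C2 c2 X2, 0 < c2 /\ forall x, x <= X2 -> Rabs (h x) <= C2 * exp (c2*x)) ->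
  exists M c, 0 < c /\ forall x, Rabs (h x) <= M * exp (-(c * Rabs x)).
Proof.
  intros Hc [C1 [c1 [X1 [Hc1 H1]]]] [C2 [c2 [X2 [Hc2 H2]]]].
  set (c := Rmin c1 c2).
  assert (Hcc : 0 < c /\ c <= c1 /\ c <= c2) by (unfold c; repeat split; [apply Rmin_pos; lra| apply Rmin_l | apply Rmin_r]).
  set (A1 := Rmax X1 0). set (A2 := Rmin X2 0).
  assert (HA : A2 <= 0 <= A1 /\ X1 <= A1 /\ A2 <= X2) by (unfold A1, A2; repeat split; [apply Rmin_r|apply Rmax_r|apply Rmax_l|apply Rmin_l]).
  destruct (continuity_ab_maj (fun x => Rabs (h x)) A2 A1) as [Mx [HMx _]]. lra.
  { intros; apply continuity_pt_filterlim. apply continuous_Rabs_comp. auto. }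
  set (B := Rabs (h Mx)).
  assert (HC1 : 0 <= C1).
  { specialize (H1 A1 (proj1 (proj2 HA))). pose proof (Rabs_pos (h A1)). pose proof (exp_pos (-(c1*A1))). nra. }
  assert (HC2 : 0 <= C2).
  { specialize (H2 A2 (proj2 (proj2 HA))). pose proof (Rabs_pos (h A2)). pose proof (exp_pos (c2*A2)). nra. }
  assert (HB : 0 <= B) by apply Rabs_pos.
  exists (C1 + C2 + B * exp (c*(A1 - A2))), c. split; [lra|]. intro x.
  pose proof (exp_pos (-(c*Rabs x))). pose proof (exp_pos (c*(A1-A2))).
  assert (0 <= B * exp (c*(A1-A2)) * exp (-(c*Rabs x))) by (apply Rmult_le_pos; [apply Rmult_le_pos|]; first [lra | left; apply exp_pos]).
  destruct (Rle_dec A1 x).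
  - specialize (H1 x ltac:(lra)). rewrite (Rabs_right x) by lra.
    assert (Hx0 : 0 <= x) by lra.
    assert (exp (-(c1*x)) <= exp (-(c*x))) by (apply exp_mono; destruct Hcc as [_ [Hq _]]; nra).
    assert (C1 * exp (-(c1*x)) <= C1 * exp (-(c*x))) by (apply Rmult_le_compat_l; lra).
    assert (0 <= C2 * exp (-(c*x))) by (apply Rmult_le_pos; [lra| left; apply exp_pos]).
    assert (0 <= B * exp (c*(A1-A2)) * exp (-(c*x))) by (apply Rmult_le_pos; [apply Rmult_le_pos|]; first [lra | left; apply exp_pos]).
    nra.
  - destruct (Rle_dec x A2).
    + specialize (H2 x ltac:(lra)). rewrite (Rabs_left1 x) by lra.
      assert (exp (c2*x) <= exp (-(c*-x))) by (apply exp_mono; destruct Hcc as [_ [_ Hq]]; nra).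
      assert (C2 * exp (c2*x) <= C2 * exp (-(c*-x))) by (apply Rmult_le_compat_l; lra).
      assert (0 <= C1 * exp (-(c*-x))) by (apply Rmult_le_pos; [lra| left; apply exp_pos]).
      assert (0 <= B * exp (c*(A1-A2)) * exp (-(c*-x))) by (apply Rmult_le_pos; [apply Rmult_le_pos|]; first [lra | left; apply exp_pos]).
      nra.
    + specialize (HMx x ltac:(lra)). fold B in HMx.
      assert (1 <= exp (c*(A1-A2)) * exp (-(c*Rabs x))).
      { rewrite <- exp_plus, <- exp_0. apply exp_mono.
        assert (Rabs x <= A1 - A2) by (unfold Rabs; destruct (Rcase_abs x); lra). destruct Hcc as [Hq _]. nra. }
      assert (0 <= C1 * exp (-(c*Rabs x))) by nra.
      assert (0 <= C2 * exp (-(c*Rabs x))) by nra.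
      nra.
Qed.

Lemma exp_quad u : 0 <= u -> u^2/2 <= exp u.
Proof.
  intro Hu.
  assert (H : (fun u => 1 + u + u^2/2) 0 <= (fun u => exp u) 0) by (simpl; rewrite exp_0; lra).
  assert (forall x, 0 <= x -> exp x - (1 + x + x^2/2) >= exp 0 - (1 + 0 + 0^2/2)).
  { intros x Hx. apply Rle_ge.
    apply (incr_from (fun u => exp u - (1 + u + u^2/2)) (fun u => exp u - (1 + u))); auto.
    - intros t _. auto_derive; auto. field.
    - intros t _. pose proof (exp_ineq1_le t). lra. }
  specialize (H0 u Hu). rewrite exp_0 in H0. lra.
Qed.

Lemma poly_exp t c : 0 <= t -> 0 < c -> 1 + t^2 <= (1 + 8/c^2) * exp (c*t/2).
Proof.
  intros Ht Hc. pose proof (exp_quad (c*t/2) ltac:(nra)).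
  pose proof (exp_ineq1_le (c*t/2)).
  assert (0 < c^2) by nra.
  assert (t^2 <= 8/c^2 * exp (c*t/2)).
  { apply Rmult_le_reg_l with (c^2). auto. replace (c^2 * (8/c^2 * exp (c*t/2))) with (8 * exp (c*t/2)) by (field; lra).
    replace ((c*t/2)^2/2) with (c^2*t^2/8) in H by field. lra. }
  nra.
Qed.

Lemma cont_affine (F : R -> R) g b x : (forall y, continuous F y) -> continuous (fun x => F (g*(x-b))) x.
Proof.
  intro H. apply (continuous_comp (fun x => g*(x-b)) F). 
  apply (ex_derive_continuous (V:=R_NormedModule)). auto_derive; auto. apply H.
Qed.

Lemma basis_cont (F1 F2 : R -> R) (g b : R) (k : nat) :
  (forall y, continuous F1 y) -> (forall y, continuous F2 y) ->
  forall x, continuous (fun x => (x-b)^k * (F1 (g*(x-b)) * F2 (g*(x-b)))) x.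
Proof.
  intros C1 C2 x. apply (continuous_mult (fun x => (x-b)^k) (fun x => F1 (g*(x-b)) * F2 (g*(x-b)))).
  apply (ex_derive_continuous (V:=R_NormedModule)). auto_derive; auto.
  apply (continuous_mult (fun x => F1 (g*(x-b))) (fun x => F2 (g*(x-b)))); apply cont_affine; auto.
Qed.

Lemma basis_bound (F1 F2 : R -> R) (M c g b : R) (k : nat) : (k <= 2)%nat -> 0 < c -> 1 <= g ->
  (forall y, F1 y ^ 2 <= M * exp (-(c * Rabs y))) ->
  (forall y, F2 y ^ 2 <= M * exp (-(c * Rabs y))) ->
  exists N c', 0 < c' /\ forall x, Rabs ((x-b)^k * (F1 (g*(x-b)) * F2 (g*(x-b)))) <= N * exp (-(c' * Rabs x)).
Proof.
  intros Hk Hc Hg B1 B2.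
  assert (HM : 0 <= M). { specialize (B1 0). pose proof (exp_pos (-(c*Rabs 0))). pose proof (pow2_ge_0 (F1 0)). nra. }
  exists (M * (1 + 8/c^2) * exp (c * Rabs b / 2)), (c/2). split. lra.
  - intro x. set (y := x - b). set (t := Rabs y).
    assert (Ht : 0 <= t) by apply Rabs_pos.
    assert (Hyk : Rabs (y^k) <= 1 + t^2).
    { rewrite <- RPow_abs. fold t. destruct k as [|[|[|k]]]; simpl; try nra. lia. }
    assert (Hgy : Rabs (g*y) = g*t) by (unfold t; rewrite Rabs_mult, Rabs_right; lra).
    assert (Hp : Rabs (F1 (g*y) * F2 (g*y)) <= M * exp (-(c*t))).
    { specialize (B1 (g*y)). specialize (B2 (g*y)). rewrite Hgy in B1, B2.
      assert (exp (-(c*(g*t))) <= exp (-(c*t))) by (apply exp_mono; assert (0 <= c*((g-1)*t)) by (apply Rmult_le_pos; [lra|apply Rmult_le_pos; lra]); nra).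
      rewrite Rabs_mult. pose proof (Rabs_pos (F1 (g*y))). pose proof (Rabs_pos (F2 (g*y))).
      rewrite <- (pow2_abs (F1 _)) in B1. rewrite <- (pow2_abs (F2 _)) in B2.
      assert (M * exp (-(c*(g*t))) <= M * exp (-(c*t))) by (apply Rmult_le_compat_l; lra).
      set (a1 := Rabs (F1 (g*y))) in *. set (a2 := Rabs (F2 (g*y))) in *.
      pose proof (pow2_ge_0 (a1 - a2)). nra. }
    rewrite Rabs_mult.
    pose proof (poly_exp t c Ht Hc).
    assert (Hx : Rabs x <= t + Rabs b).
    { unfold t, y. replace x with ((x - b) + b) at 1 by ring. apply Rabs_triang. }
    assert (exp (c*t/2) * exp (-(c*t)) * exp (-(c*Rabs b/2)) <= exp (-(c/2 * Rabs x))).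
    { rewrite <- !exp_plus. apply exp_mono. nra. }
    assert (E1 : exp (c*Rabs b/2) * exp (-(c*Rabs b/2)) = 1).
    { rewrite <- exp_plus. replace (c*Rabs b/2 + -(c*Rabs b/2)) with 0 by ring. apply exp_0. }
    pose proof (exp_pos (c*t/2)). pose proof (exp_pos (-(c*t))). pose proof (exp_pos (c*Rabs b/2)).
    pose proof (exp_pos (-(c*Rabs b/2))). pose proof (Rabs_pos (y^k)). pose proof (Rabs_pos (F1 (g*y) * F2 (g*y))).
    assert (S1 : Rabs (y^k) * Rabs (F1 (g*y) * F2 (g*y)) <= (1 + 8/c^2) * exp (c*t/2) * (M * exp (-(c*t)))).
    { apply Rmult_le_compat; auto. lra. }
    assert (0 <= M * (1 + 8/c^2) * exp (c * Rabs b / 2)).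
    { apply Rmult_le_pos; [|lra]. apply Rmult_le_pos; auto. assert (0 <= 8/c^2) by (apply Rdiv_le_0_compat; nra). lra. }
    eapply Rle_trans. exact S1.
    replace ((1 + 8/c^2) * exp (c*t/2) * (M * exp (-(c*t)))) with
      ((M * (1 + 8/c^2) * exp (c * Rabs b / 2)) * (exp (c*t/2) * exp (-(c*t)) * exp (-(c*Rabs b/2)))).
    apply Rmult_le_compat_l; auto.
    transitivity ((1 + 8/c^2) * exp (c*t/2) * (M * exp (-(c*t))) * (exp (c*Rabs b/2) * exp (-(c*Rabs b/2)))).
    ring. rewrite E1. ring.
Qed.

Lemma basis_int (F1 F2 : R -> R) (M c g b : R) (k : nat) : (k <= 2)%nat -> 0 < c -> 1 <= g ->
  (forall y, continuous F1 y) -> (forall y, continuous F2 y) ->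
  (forall y, F1 y ^ 2 <= M * exp (-(c * Rabs y))) ->
  (forall y, F2 y ^ 2 <= M * exp (-(c * Rabs y))) ->
  exists l, is_RInt_gen (fun x => (x-b)^k * (F1 (g*(x-b)) * F2 (g*(x-b)))) (Rbar_locally m_infty) (Rbar_locally p_infty) l.
Proof.
  intros Hk Hc Hg C1 C2 B1 B2.
  destruct (basis_bound F1 F2 M c g b k Hk Hc Hg B1 B2) as [N [c' [Hc' HB]]].
  apply (int_signed _ N c' Hc'); auto. apply basis_cont; auto.
Qed.


Lemma gamma_pos v : -1 < v < 1 -> 0 < gamma v.
Proof. intro. unfold gamma. apply Rinv_0_lt_compat, sqrt_lt_R0. nra. Qed.

Lemma gamma_ge1 v : -1 < v < 1 -> 1 <= gamma v.
Proof.
  intro. unfold gamma. assert (0 < sqrt (1 - v^2)) by (apply sqrt_lt_R0; nra).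
  assert (Hq : sqrt (1 - v^2) <= sqrt 1) by (apply sqrt_le_1_alt; nra). rewrite sqrt_1 in Hq.
  apply Rmult_le_reg_l with (sqrt (1 - v^2)); auto. rewrite Rinv_r; lra.
Qed.

Lemma gamma_deriv v : -1 < v < 1 -> is_derive gamma v (v * gamma v ^ 3).
Proof.
  intro Hv. unfold gamma. assert (0 < 1 - v^2) by nra.
  assert (Hs : 0 < sqrt (1 - v^2)) by (apply sqrt_lt_R0; lra).
  replace (1 + - (v * (v * 1))) with (1 - v^2) by ring.
  auto_derive.
  - replace (1 + - (v * (v * 1))) with (1 - v^2) by ring. repeat split; lra.
  - replace (1 + - (v * (v * 1))) with (1 - v^2) by ring. field. lra.
Qed.

Ltac eta := repeat match goal with |- context [Derive (fun x => ?f x)] => change (Derive (fun x => f x)) with (Derive f) end.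

Lemma D_psi (s : R -> R) (v y : R) : (forall x, ex_derive s x) ->
  Derive (psi_v s v) y = gamma v * Derive s (gamma v * y).
Proof.
  intro Hs. apply is_derive_unique. unfold psi_v. auto_derive. auto. eta. ring.
Qed.

Lemma psi_fun (s : R -> R) v : (forall x, ex_derive s x) ->
  Derive (psi_v s v) = fun y => gamma v * Derive s (gamma v * y).
Proof. intro Hs. apply functional_extensionality. intro. apply D_psi; auto. Qed.

Lemma pi_eq (s : R -> R) v y : (forall x, ex_derive s x) ->
  pi_v s v y = - v * (gamma v * Derive s (gamma v * y)).
Proof. intro Hs. unfold pi_v. rewrite D_psi; auto. Qed.

Lemma D_pi (s : R -> R) (v y : R) : (forall x, ex_derive s x) -> (forall x, ex_derive (Derive s) x) ->
  Derive (pi_v s v) y = - v * gamma v ^ 2 * Derive (Derive s) (gamma v * y).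
Proof.
  intros Hs Hs1. apply is_derive_unique.
  apply is_derive_ext with (fun y => - v * (gamma v * Derive s (gamma v * y))).
  intro; symmetry; apply pi_eq; auto.
  auto_derive. auto. eta. ring.
Qed.

Lemma D_psi_v (s : R -> R) (v y : R) : -1 < v < 1 -> (forall x, ex_derive s x) ->
  Derive (fun w => psi_v s w y) v = v * gamma v ^ 3 * y * Derive s (gamma v * y).
Proof.
  intros Hv Hs. apply is_derive_unique. unfold psi_v.
  pose proof (gamma_deriv v Hv).
  auto_derive. repeat split; [apply Hs | exists (v * gamma v ^ 3); exact H].
  eta. rewrite (is_derive_unique _ _ _ H). ring.
Qed.

Lemma D_pi_v (s : R -> R) (v y : R) : -1 < v < 1 -> (forall x, ex_derive s x) -> (forall x, ex_derive (Derive s) x) ->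
  Derive (fun w => pi_v s w y) v =
   - (gamma v + v * (v * gamma v ^ 3)) * Derive s (gamma v * y)
   - v * gamma v * (v * gamma v ^ 3) * y * Derive (Derive s) (gamma v * y).
Proof.
  intros Hv Hs Hs1. apply is_derive_unique.
  apply is_derive_ext with (fun w => - w * (gamma w * Derive s (gamma w * y))).
  intro; symmetry; apply pi_eq; auto.
  pose proof (gamma_deriv v Hv).
  auto_derive. repeat split; try (exists (v * gamma v ^ 3); exact H); apply Hs1.
  eta. rewrite (is_derive_unique _ _ _ H). ring.
Qed.



Lemma lin5 (b0 b1 b2 b3 b4 : R -> R) (l0 l1 l2 l3 l4 a0 a1 a2 a3 a4 : R) :
  is_RInt_gen b0 (Rbar_locally m_infty) (Rbar_locally p_infty) l0 ->
  is_RInt_gen b1 (Rbar_locally m_infty) (Rbar_locally p_infty) l1 ->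
  is_RInt_gen b2 (Rbar_locally m_infty) (Rbar_locally p_infty) l2 ->
  is_RInt_gen b3 (Rbar_locally m_infty) (Rbar_locally p_infty) l3 ->
  is_RInt_gen b4 (Rbar_locally m_infty) (Rbar_locally p_infty) l4 ->
  is_RInt_gen (fun x => a0 * b0 x + a1 * b1 x + a2 * b2 x + a3 * b3 x + a4 * b4 x)
    (Rbar_locally m_infty) (Rbar_locally p_infty) (a0*l0 + a1*l1 + a2*l2 + a3*l3 + a4*l4).
Proof.
  intros H0 H1 H2 H3 H4.
  apply (is_RInt_gen_scal _ a0) in H0. apply (is_RInt_gen_scal _ a1) in H1.
  apply (is_RInt_gen_scal _ a2) in H2. apply (is_RInt_gen_scal _ a3) in H3.
  apply (is_RInt_gen_scal _ a4) in H4.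
  pose proof (is_RInt_gen_plus _ _ _ _ H0 H1) as H01.
  pose proof (is_RInt_gen_plus _ _ _ _ H01 H2) as H012.
  pose proof (is_RInt_gen_plus _ _ _ _ H012 H3) as H0123.
  pose proof (is_RInt_gen_plus _ _ _ _ H0123 H4) as H5.
  exact H5.
Qed.

Lemma energy (a : R) (U s : R -> R) : (forall x, ex_derive U x) -> (forall x, ex_derive s x) ->
  (forall x, ex_derive (Derive s) x) -> (forall x, Derive (Derive s) x = Derive U (s x)) ->
  is_lim s p_infty a -> U a = 0 -> forall x, Derive s x ^ 2 = 2 * U (s x).
Proof.
  intros HU Hs Hs1 Hs2 Hl Ua.
  set (E := fun x => Derive s x ^ 2 - 2 * U (s x)).
  assert (HE : forall x, is_derive E x 0).
  { intro x. unfold E. auto_derive. repeat split; auto. eta. rewrite Hs2. ring. }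
  assert (Hc : forall x, E x = E 0).
  { intro x. destruct (Rtotal_order x 0) as [H|[->|H]].
    - apply (eq_is_derive E x 0); [intros; apply HE | exact H].
    - reflexivity.
    - symmetry. apply (eq_is_derive E 0 x); [intros; apply HE | exact H]. }
  set (c := E 0) in *.
  assert (HUc : continuous U a) by (apply (ex_derive_continuous (V:=R_NormedModule)); auto).
  assert (Hc0 : c = 0).
  { destruct (Req_dec c 0) as [|Hne]; auto. exfalso.
    assert (He : 0 < Rabs c / 4) by (apply Rdiv_lt_0_compat; [apply Rabs_pos_lt; auto| lra]).
    apply filterlim_locally with (eps := mkposreal _ He) in HUc. destruct HUc as [d Hd].
    destruct (lim_pinf s a d (cond_pos d) Hl) as [X HX].
    destruct (lim_pinf s a 1 Rlt_0_1 Hl) as [X' HX'].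
    assert (HUs : forall x, Rmax X X' < x -> Rabs (U (s x)) < Rabs c / 4).
    { intros x Hx. assert (ball a d (s x)) by (apply HX; pose proof (Rmax_l X X'); lra).
      apply Hd in H. rewrite Ua in H. unfold ball in H; simpl in H. unfold AbsRing_ball, abs, minus, plus, opp in H; simpl in H.
      rewrite Ropp_0, Rplus_0_r in H. exact H. }
    assert (Hsx : forall x, Rmax X X' < x -> Derive s x ^ 2 = 2 * U (s x) + c).
    { intros x _. specialize (Hc x). unfold E in Hc. fold c in Hc. lra. }
    destruct (Rlt_dec c 0).
    + set (x := Rmax X X' + 1). specialize (HUs x ltac:(unfold x; lra)). specialize (Hsx x ltac:(unfold x; lra)).
      rewrite (Rabs_left c) in HUs by lra. apply Rabs_def2 in HUs. pose proof (pow2_ge_0 (Derive s x)). lra.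
    + assert (0 < c) by lra. rewrite (Rabs_right c) in HUs by lra.
      set (x0 := Rmax X X' + 1). set (T := 1 + 18/c).
      assert (HT : 1 <= T /\ 18/c <= T) by (unfold T; assert (0 < 18/c) by (apply Rdiv_lt_0_compat; lra); lra).
      destruct (mvt s (Derive s) x0 (x0 + T)) as [xi [Hxi Heq]]. lra.
      intros; apply Derive_correct; auto.
      assert (Hxi' : Rmax X X' < xi) by (unfold x0 in Hxi; lra).
      specialize (HUs xi Hxi'). specialize (Hsx xi Hxi'). apply Rabs_def2 in HUs.
      assert (H1 : Rabs (s x0 - a) < 1) by (apply HX'; pose proof (Rmax_r X X'); unfold x0; lra).
      assert (H2 : Rabs (s (x0+T) - a) < 1) by (apply HX'; pose proof (Rmax_r X X'); unfold x0; lra).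
      apply Rabs_def2 in H1. apply Rabs_def2 in H2.
      replace (x0 + T - x0) with T in Heq by ring.
      assert (Hsq : c/2 <= Derive s xi ^ 2) by lra.
      assert (H3 : c/2 * T^2 <= (Derive s xi * T)^2) by (replace ((Derive s xi * T)^2) with (Derive s xi ^2 * T^2) by ring; apply Rmult_le_compat_r; [apply pow2_ge_0|lra]).
      assert (9 <= c/2 * T^2).
      { assert (H4 : c/2 * T^2 >= c/2 * T * (18/c)). 
        { apply Rle_ge. replace (c/2*T^2) with (c/2*T*T) by ring. apply Rmult_le_compat_l. nra. lra. }
        replace (c/2*T*(18/c)) with (9*T) in H4 by (field; lra). lra. }
      rewrite <- Heq in H3. nra. }
  intro x. specialize (Hc x). unfold E in Hc. lra.
Qed.


Theorem lemma3p2 (a : R) (U s : R -> R) :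
  a > 0 ->
  condition_U1 a U ->
  is_kink a U s ->
  forall b v : R, -1 < v < 1 ->
    nondegenerate_on_span (tau1 s b v) (tau2 s b v).
Proof.
  intros Ha HU1 Hk b v Hv.
  destruct HU1 as [Hsm [Ua [Uma [DUa [DUma [D2a [D2ma [Upos [Lb [m [Hm [[C1 [d1 [Hd1 HE1]]] [C2 [d2 [Hd2 HE2]]]]]]]]]]]]]]].
  destruct Hk as [Hs [Hs1 [Hs2 [Hlp Hlm]]]].
  assert (HU0 : forall x, ex_derive U x) by (intro x; exact (Hsm 0%nat x)).
  assert (HU1' : forall x, ex_derive (Derive U) x) by (intro x; exact (Hsm 1%nat x)).
  assert (HU2c : forall x, continuous (Derive (Derive U)) x).
  { intro x. apply (ex_derive_continuous (V:=R_NormedModule)). exact (Hsm 2%nat x). }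
  assert (Hs2' : forall x, Derive (Derive s) x = Derive U (s x)) by (intro x; exact (Hs2 x)).
  assert (Hs1c : forall x, continuous (Derive s) x) by (intro; apply (ex_derive_continuous (V:=R_NormedModule)); auto).
  assert (Hs2c : forall x, continuous (Derive (Derive s)) x).
  { intro x. apply (continuous_ext (fun x => Derive U (s x))). intro; symmetry; auto.
    apply (continuous_comp s (Derive U)). apply (ex_derive_continuous (V:=R_NormedModule)); auto.
    apply (ex_derive_continuous (V:=R_NormedModule)); auto. }
  pose proof (energy a U s HU0 Hs Hs1 Hs2' Hlp Ua) as HE.
  destruct (U_quad U a m C1 d1 Hm Hd1 HE1) as [rho1 [k1 [K1 [Hr1 [Hk1 HB1]]]]].
  assert (HE2' : forall p, Rabs (p - -a) < d2 -> Rabs (U p - m ^ 2 / 2 * (p - -a) ^ 2) <= C2 * Rabs (p - -a) ^ 14).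
  { intro p. replace (p - -a) with (p + a) by ring. apply HE2. }
  destruct (U_quad U (-a) m C2 d2 Hm Hd2 HE2') as [rho2 [k2 [K2 [Hr2 [Hk2 HB2]]]]].
  destruct (Up_bound U a HU1' HU2c DUa) as [r3 [K3 [Hr3 HB3]]].
  destruct (Up_bound U (-a) HU1' HU2c DUma) as [r4 [K4 [Hr4 HB4]]].
  destruct (decay s U a k1 K1 rho1 Hs Hs1c HE Hk1 Hr1 HB1 Hlp) as [Cp [kp [Xp [Hkp HDp]]]].
  set (st := fun x => s (-x)).
  assert (Hst : forall x, ex_derive st x) by (intro; unfold st; auto_derive; auto).
  assert (Dst : forall x, Derive st x = - Derive s (-x)).
  { intro x. apply is_derive_unique. unfold st. auto_derive. auto. eta. ring. }
  assert (Hstc : forall x, continuous (Derive st) x).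
  { intro x. apply (continuous_ext (fun x => - Derive s (-x))). intro; symmetry; auto.
    apply (continuous_opp (fun x => Derive s (-x))).
    apply (continuous_comp Ropp (Derive s)). apply (ex_derive_continuous (V:=R_NormedModule)). auto_derive; auto. auto. }
  assert (HEt : forall x, Derive st x ^ 2 = 2 * U (st x)).
  { intro x. rewrite Dst. unfold st. rewrite <- HE. ring. }
  assert (Hlt : is_lim st p_infty (-a)).
  { unfold st. apply (is_lim_comp s Ropp p_infty (-a) m_infty). exact Hlm.
    apply (is_lim_opp (fun y => y) p_infty p_infty). apply is_lim_id.
    exists 0. intros. discriminate. }
  destruct (decay st U (-a) k2 K2 rho2 Hst Hstc HEt Hk2 Hr2 HB2 Hlt) as [Cm [km [Xm [Hkm HDm]]]].
  set (h := fun x => Derive s x ^ 2 + Derive (Derive s) x ^ 2).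
  assert (Hh0 : forall x, 0 <= h x) by (intro; unfold h; pose proof (pow2_ge_0 (Derive s x)); pose proof (pow2_ge_0 (Derive (Derive s) x)); lra).
  assert (Hhc : forall x, continuous h x).
  { intro x. apply (continuous_plus (fun x => Derive s x ^ 2) (fun x => Derive (Derive s) x ^ 2)).
    - apply (continuous_comp (Derive s) (fun y => y^2)). auto. apply (ex_derive_continuous (V:=R_NormedModule)); auto_derive; auto.
    - apply (continuous_comp (Derive (Derive s)) (fun y => y^2)). auto. apply (ex_derive_continuous (V:=R_NormedModule)); auto_derive; auto. }
  assert (Hhp : forall x, Rabs (s x - a) <= rho1 -> Rabs (s x - a) <= r3 -> h x <= (2*K1 + K3^2) * (s x - a)^2).
  { intros x H1 H3. unfold h. rewrite HE, Hs2'. destruct (HB1 _ H1) as [_ Hu]. specialize (HB3 _ H3).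
    rewrite <- (pow2_abs (Derive U (s x))). rewrite <- (pow2_abs (s x - a)).
    rewrite <- (pow2_abs (s x - a)) in Hu. pose proof (Rabs_pos (Derive U (s x))). nra. }
  assert (Hhm : forall x, Rabs (s x - -a) <= rho2 -> Rabs (s x - -a) <= r4 -> h x <= (2*K2 + K4^2) * (s x - -a)^2).
  { intros x H1 H3. unfold h. rewrite HE, Hs2'. destruct (HB2 _ H1) as [_ Hu]. specialize (HB4 _ H3).
    rewrite <- (pow2_abs (Derive U (s x))). rewrite <- (pow2_abs (s x - -a)).
    rewrite <- (pow2_abs (s x - -a)) in Hu. pose proof (Rabs_pos (Derive U (s x))). nra. }
  assert (HK1 : 0 <= 2*K1 + K3^2).
  { assert (Hq : Rabs (a + rho1 - a) <= rho1) by (replace (a + rho1 - a) with rho1 by ring; rewrite Rabs_right; lra).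
    destruct (HB1 _ Hq) as [Q1 Q2]. replace (a + rho1 - a) with rho1 in Q1, Q2 by ring.
    assert (0 < rho1^2) by (apply pow_lt; lra). assert (k1 <= K1) by (apply Rmult_le_reg_r with (rho1^2); lra).
    pose proof (pow2_ge_0 K3). lra. }
  assert (HK2 : 0 <= 2*K2 + K4^2).
  { assert (Hq : Rabs (-a + rho2 - -a) <= rho2) by (replace (-a + rho2 - -a) with rho2 by ring; rewrite Rabs_right; lra).
    destruct (HB2 _ Hq) as [Q1 Q2]. replace (-a + rho2 - -a) with rho2 in Q1, Q2 by ring.
    assert (0 < rho2^2) by (apply pow_lt; lra). assert (k2 <= K2) by (apply Rmult_le_reg_r with (rho2^2); lra).
    pose proof (pow2_ge_0 K4). lra. }
  destruct (glue h Hhc) as [Mh [ch [Hch HBh]]].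
  { destruct (lim_pinf s a (Rmin rho1 r3) ltac:(apply Rmin_pos; lra) Hlp) as [X0 HX0].
    exists ((2*K1 + K3^2) * Cp), kp, (Rmax Xp (X0+1)). split; auto. intros x Hx.
    assert (Hx1 : Xp <= x) by (pose proof (Rmax_l Xp (X0+1)); lra).
    assert (Hx2 : X0 < x) by (pose proof (Rmax_r Xp (X0+1)); lra).
    specialize (HX0 x Hx2). pose proof (Rmin_l rho1 r3). pose proof (Rmin_r rho1 r3).
    rewrite Rabs_right by (apply Rle_ge; auto).
    eapply Rle_trans. apply Hhp; lra. rewrite Rmult_assoc. apply Rmult_le_compat_l; auto. }
  { destruct (lim_minf s (-a) (Rmin rho2 r4) ltac:(apply Rmin_pos; lra) Hlm) as [X0 HX0].
    exists ((2*K2 + K4^2) * Cm), km, (Rmin (-Xm) (X0-1)). split; auto. intros x Hx.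
    assert (Hx1 : Xm <= -x) by (pose proof (Rmin_l (-Xm) (X0-1)); lra).
    assert (Hx2 : x < X0) by (pose proof (Rmin_r (-Xm) (X0-1)); lra).
    specialize (HX0 x Hx2). pose proof (Rmin_l rho2 r4). pose proof (Rmin_r rho2 r4).
    rewrite Rabs_right by (apply Rle_ge; auto).
    eapply Rle_trans. apply Hhm; lra. rewrite Rmult_assoc. apply Rmult_le_compat_l; auto.
    specialize (HDm (-x) Hx1). unfold st in HDm. rewrite Ropp_involutive in HDm.
    replace (km * x) with (-(km * -x)) by ring. exact HDm. }
  assert (HF1 : forall y, Derive s y ^ 2 <= Mh * exp (-(ch * Rabs y))).
  { intro y. specialize (HBh y). rewrite Rabs_right in HBh by (apply Rle_ge; auto). unfold h in HBh.
    pose proof (pow2_ge_0 (Derive (Derive s) y)). lra. }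
  assert (HF2 : forall y, Derive (Derive s) y ^ 2 <= Mh * exp (-(ch * Rabs y))).
  { intro y. specialize (HBh y). rewrite Rabs_right in HBh by (apply Rle_ge; auto). unfold h in HBh.
    pose proof (pow2_ge_0 (Derive s y)). lra. }
  set (g := gamma v). assert (Hg1 : 1 <= g) by (apply gamma_ge1; auto).
  set (s1 := Derive s). set (s2 := Derive (Derive s)).
  destruct (basis_int s1 s2 Mh ch g b 0 ltac:(lia) Hch Hg1 Hs1c Hs2c HF1 HF2) as [l0 I0].
  destruct (basis_int s1 s1 Mh ch g b 0 ltac:(lia) Hch Hg1 Hs1c Hs1c HF1 HF1) as [l1 I1].
  destruct (basis_int s1 s2 Mh ch g b 1 ltac:(lia) Hch Hg1 Hs1c Hs2c HF1 HF2) as [l2 I2].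
  destruct (basis_int s1 s1 Mh ch g b 1 ltac:(lia) Hch Hg1 Hs1c Hs1c HF1 HF1) as [l3 I3].
  destruct (basis_int s1 s2 Mh ch g b 2 ltac:(lia) Hch Hg1 Hs1c Hs2c HF1 HF2) as [l4 I4].
  assert (Hnz : exists y0, s1 y0 <> 0).
  { apply NNPP. intro Hn. assert (Hz : forall y, s1 y = 0) by (intro y; apply NNPP; intro; apply Hn; eauto).
    assert (Hcst : forall x, s x = s 0).
    { intro x. assert (Hd : forall t, is_derive s t 0) by (intro t; rewrite <- (Hz t); apply Derive_correct; auto).
      destruct (Rtotal_order x 0) as [H|[->|H]].
      - apply (eq_is_derive s x 0); [intros; apply Hd | exact H].
      - reflexivity.
      - symmetry. apply (eq_is_derive s 0 x); [intros; apply Hd | exact H]. }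
    destruct (lim_pinf s a a Ha Hlp) as [X1 HX1].
    destruct (lim_minf s (-a) a Ha Hlm) as [X2 HX2].
    specialize (HX1 (Rabs X1 + 1) ltac:(pose proof (Rle_abs X1); lra)).
    specialize (HX2 (-(Rabs X2) - 1) ltac:(pose proof (Rle_abs (-X2)); rewrite Rabs_Ropp in *; lra)).
    rewrite Hcst in HX1, HX2. apply Rabs_def2 in HX1. apply Rabs_def2 in HX2. lra. }
  destruct Hnz as [y0 Hy0].
  destruct (basis_bound s1 s1 Mh ch g b 0 ltac:(lia) Hch Hg1 HF1 HF1) as [N1 [c1' [Hc1' HN1]]].
  assert (Hl1 : 0 < l1).
  { apply (int_pos (fun x => (x - b) ^ 0 * (s1 (g * (x - b)) * s1 (g * (x - b)))) N1 c1' (b + y0 / g) l1 Hc1'); auto.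
    - apply basis_cont; auto.
    - intro x. rewrite <- (Rabs_right ((x - b) ^ 0 * (s1 (g * (x - b)) * s1 (g * (x - b))))). split. apply Rabs_pos. apply HN1.
      simpl. apply Rle_ge. rewrite Rmult_1_l. apply Rle_0_sqr.
    - replace (g * (b + y0 / g - b)) with y0 by (field; lra). simpl. rewrite Rmult_1_l.
      apply Rsqr_pos_lt. auto. }
  assert (Ct1f : forall x, fst (tau1 s b v x) = -(g * s1 (g*(x-b)))).
  { intro x. unfold tau1, g, s1. simpl. rewrite D_psi; auto. }
  assert (Ct1s : forall x, snd (tau1 s b v x) = -(-v * g^2 * s2 (g*(x-b)))).
  { intro x. unfold tau1, g, s2. simpl. rewrite D_pi; auto. }
  assert (Ct2f : forall x, fst (tau2 s b v x) = v * g^3 * (x-b) * s1 (g*(x-b))).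
  { intro x. unfold tau2, g, s1. simpl. rewrite D_psi_v; auto. }
  assert (Ct2s : forall x, snd (tau2 s b v x) = - (g + v * (v * g ^ 3)) * s1 (g*(x-b))
      - v * g * (v * g ^ 3) * (x-b) * s2 (g*(x-b))).
  { intro x. unfold tau2, g, s1, s2. simpl. rewrite D_pi_v; auto. }
  assert (Lv : forall (F : R -> R) A0 A1 A2 A3 A4,
    (forall x, F x = A0 * ((x - b) ^ 0 * (s1 (g * (x - b)) * s2 (g * (x - b))))
                   + A1 * ((x - b) ^ 0 * (s1 (g * (x - b)) * s1 (g * (x - b))))
                   + A2 * ((x - b) ^ 1 * (s1 (g * (x - b)) * s2 (g * (x - b))))
                   + A3 * ((x - b) ^ 1 * (s1 (g * (x - b)) * s1 (g * (x - b))))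
                   + A4 * ((x - b) ^ 2 * (s1 (g * (x - b)) * s2 (g * (x - b))))) ->
    RInt_gen F (Rbar_locally m_infty) (Rbar_locally p_infty) = A0*l0 + A1*l1 + A2*l2 + A3*l3 + A4*l4).
  { intros F A0 A1 A2 A3 A4 HF. apply functional_extensionality in HF. rewrite HF.
    apply is_RInt_gen_unique. apply lin5; auto. }
  set (G' := v * g^3).
  assert (HOm : forall e1 e2 f1 f2, Omega (lincomb e1 e2 (tau1 s b v) (tau2 s b v)) (lincomb f1 f2 (tau1 s b v) (tau2 s b v))
     = (e1*f2 - e2*f1) * (g*(g + v*G')) * l1).
  { intros e1 e2 f1 f2. unfold Omega, L2inner.
    erewrite (Lv _ (-e1*f1*v*g^3) (e1*f2*g*(g+v*G')) ((e1*f2+e2*f1)*v*g^2*G') (-e2*f2*G'*(g+v*G')) (-e2*f2*v*g*G'^2)).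
    erewrite (Lv _ (-e1*f1*v*g^3) (e2*f1*g*(g+v*G')) ((e1*f2+e2*f1)*v*g^2*G') (-e2*f2*G'*(g+v*G')) (-e2*f2*v*g*G'^2)).
    ring.
    - intro x. unfold lincomb. cbn [fst snd]. rewrite Ct1f, Ct1s, Ct2f, Ct2s. unfold G'. ring.
    - intro x. unfold lincomb. cbn [fst snd]. rewrite Ct1f, Ct1s, Ct2f, Ct2s. unfold G'. ring. }
  assert (Hgp : 0 < g) by (apply gamma_pos; auto).
  assert (HK : 0 < g*(g + v*G')).
  { unfold G'. apply Rmult_lt_0_compat; auto. assert (0 <= v*v*g^3) by (apply Rmult_le_pos; [nra| apply pow_le; lra]). nra. }
  intros e1 e2 Hort x.
  pose proof (Hort 0 1) as H01. pose proof (Hort 1 0) as H10.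
  rewrite HOm in H01, H10.
  assert (e1 = 0).
  { replace ((e1*1 - e2*0) * (g*(g+v*G')) * l1) with (e1 * ((g*(g+v*G')) * l1)) in H01 by ring.
    apply Rmult_integral in H01. destruct H01; auto. nra. }
  assert (e2 = 0).
  { replace ((e1*0 - e2*1) * (g*(g+v*G')) * l1) with (-e2 * ((g*(g+v*G')) * l1)) in H10 by ring.
    apply Rmult_integral in H10. destruct H10; [lra|]. nra. }
  subst. unfold lincomb. f_equal; ring.
Qed.
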